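(* Let $n,N\ge 1$, let $J\in\Gamma_0(\mathbb{R}^n)$, and let $H_1,\dots,H_N\in\Gamma_0(\mathbb{R}^n)$ with $\mathrm{dom}\, H_j=\mathbb{R}^n$ for every $j$. Define $S_H:\mathbb{R}^n\times\mathbb{R}^N\to\mathbb{R}\cup\{+\infty\}$ by $$S_H(x,t_1,\dots,t_N)=\sup_{p\in\mathbb{R}^n}\Big(\langle p,x\rangle-J^*(p)-\sum_{j=1}^N t_jH_j(p)\Big)$$ if $t_1,\dots,t_N\ge 0$, and $S_H(x,t_1,\dots,t_N)=+\infty$ otherwise. Then $S_H\in\Gamma_0(\mathbb{R}^{n+N})$ and its Legendre transform is $$S_H^*(p,E_1^-,\dots,E_N^-)=J^*(p)+\sum_{j=1}^N I\{E_j^-+H_j(p)\le 0\}\qquad\text{for all }p\in\mathbb{R}^n,\ (E_1^-,\dots,E_N^-)\in\mathbb{R}^N.$$ Moreover, if in addition hypotheses (H1) and (H2) hold, then $S_H(x,t_1,\dots,t_N)$ is finite for every $x\in\mathbb{R}^n$ and every $t_1,\dots,t_N\ge 0$ that are not all zero.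
   Context: $\Gamma_0(\mathbb{R}^m)$ denotes the set of proper, convex, lower semicontinuous functions $\mathbb{R}^m\to\mathbb{R}\cup\{+\infty\}$. For $f\in\Gamma_0(\mathbb{R}^m)$, $f^*(p)=\sup_x \langle p,x\rangle-f(x)$ is its Legendre transform. $I\{\cdot\}$ denotes the indicator function of the set described by the constraint (value $0$ on the set, $+\infty$ off it). A function $g$ is 1-coercive if $g(x)/\|x\|\to+\infty$ as $\|x\|\to\infty$. Hypothesis (H1): each $H_j:\mathbb{R}^n\to\mathbb{R}$ ($j=1,\dots,N$) is finite-valued, convex and 1-coercive, and at least one $H_j$ is strictly convex. Hypothesis (H2): $J\in\Gamma_0(\mathbb{R}^n)$. *)

(* Defs.v *)
From Stdlib Require Import Reals Lra ClassicalEpsilon.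
Open Scope R_scope.

Inductive ereal : Type := EFin (r : R) | EPInf | ENInf.

Definition ele (a b : ereal) : Prop :=
  match a, b with
  | ENInf, _ => True
  | _, EPInf => True
  | EFin x, EFin y => x <= y
  | _, _ => False
  end.

Definition elt (a b : ereal) : Prop := ele a b /\ a <> b.

(* addition with the convention (+∞) + (-∞) = +∞ (never used on such pairs here) *)
Definition eplus (a b : ereal) : ereal :=
  match a, b with
  | EPInf, _ => EPInf
  | _, EPInf => EPInf
  | ENInf, _ => ENInf
  | _, ENInf => ENInf
  | EFin x, EFin y => EFin (x + y)
  end.

Definition eopp (a : ereal) : ereal :=
  match a with EFin x => EFin (- x) | EPInf => ENInf | ENInf => EPInf end.

(* real scalar times extended real, convention 0 * (±∞) = 0 *)
Definition escal (t : R) (a : ereal) : ereal :=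
  match Req_EM_T t 0 with
  | left _ => EFin 0
  | right _ =>
      match a with
      | EFin x => EFin (t * x)
      | EPInf => if Rlt_dec 0 t then EPInf else ENInf
      | ENInf => if Rlt_dec 0 t then ENInf else EPInf
      end
  end.

Definition is_lub_E (P : ereal -> Prop) (s : ereal) : Prop :=
  (forall y, P y -> ele y s) /\ (forall b, (forall y, P y -> ele y b) -> ele s b).

Definition esup (P : ereal -> Prop) : ereal :=
  epsilon (inhabits EPInf) (is_lub_E P).

(** * Vectors of R^n, represented as [nat -> R] vanishing at indices >= n *)
Definition inRn (n : nat) (x : nat -> R) : Prop :=
  forall i, (n <= i)%nat -> x i = 0.

Fixpoint rsum (n : nat) (f : nat -> R) : R :=
  match n with O => 0 | S k => rsum k f + f k end.

Fixpoint esum (n : nat) (f : nat -> ereal) : ereal :=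
  match n with O => EFin 0 | S k => eplus (esum k f) (f k) end.

Definition dot (n : nat) (p x : nat -> R) : R := rsum n (fun i => p i * x i).
Definition norm (n : nat) (x : nat -> R) : R := sqrt (dot n x x).

Definition vadd (x y : nat -> R) : nat -> R := fun i => x i + y i.
Definition vsub (x y : nat -> R) : nat -> R := fun i => x i - y i.
Definition vscal (l : R) (x : nat -> R) : nat -> R := fun i => l * x i.

Definition vcat (n : nat) (x t : nat -> R) : nat -> R :=
  fun i => if Nat.ltb i n then x i else t (i - n)%nat.

Definition vfst (n : nat) (z : nat -> R) : nat -> R :=
  fun i => if Nat.ltb i n then z i else 0.
Definition vsnd (n m : nat) (z : nat -> R) : nat -> R :=
  fun j => if Nat.ltb j m then z (n + j)%nat else 0.

Definition proper (n : nat) (f : (nat -> R) -> ereal) : Prop :=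
  (exists x, inRn n x /\ f x <> EPInf) /\ (forall x, inRn n x -> f x <> ENInf).

Definition convex (n : nat) (f : (nat -> R) -> ereal) : Prop :=
  forall x y l, inRn n x -> inRn n y -> 0 < l < 1 ->
    ele (f (vadd (vscal l x) (vscal (1 - l) y)))
        (eplus (escal l (f x)) (escal (1 - l) (f y))).

Definition strictly_convex (n : nat) (f : (nat -> R) -> ereal) : Prop :=
  forall x y l, inRn n x -> inRn n y -> x <> y -> 0 < l < 1 ->
    elt (f (vadd (vscal l x) (vscal (1 - l) y)))
        (eplus (escal l (f x)) (escal (1 - l) (f y))).

Definition lsc (n : nat) (f : (nat -> R) -> ereal) : Prop :=
  forall x a, inRn n x -> elt (EFin a) (f x) ->
    exists d, 0 < d /\
      forall y, inRn n y -> norm n (vsub y x) < d -> elt (EFin a) (f y).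

Definition Gamma0 (n : nat) (f : (nat -> R) -> ereal) : Prop :=
  proper n f /\ convex n f /\ lsc n f.

Definition full_dom (n : nat) (f : (nat -> R) -> ereal) : Prop :=
  forall x, inRn n x -> f x <> EPInf.

Definition finite_valued (n : nat) (f : (nat -> R) -> ereal) : Prop :=
  forall x, inRn n x -> exists r, f x = EFin r.

Definition coercive1 (n : nat) (f : (nat -> R) -> ereal) : Prop :=
  forall M, exists R0, forall x, inRn n x -> R0 < norm n x ->
    ele (EFin (M * norm n x)) (f x).

Definition conj (n : nat) (f : (nat -> R) -> ereal) : (nat -> R) -> ereal :=
  fun p => esup (fun y => exists x, inRn n x /\
                     y = eplus (EFin (dot n p x)) (eopp (f x))).

Definition indic (P : Prop) : ereal :=
  if excluded_middle_informative P then EFin 0 else EPInf.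

Definition tnonneg (N : nat) (t : nat -> R) : Prop :=
  forall j, (j < N)%nat -> 0 <= t j.

(* S_H(x, t) for x ∈ R^n, t ∈ R^N (H_j indexed by j = 0..N-1) *)
Definition SH_xt (n N : nat) (J : (nat -> R) -> ereal)
  (H : nat -> (nat -> R) -> ereal) (x t : nat -> R) : ereal :=
  if excluded_middle_informative (tnonneg N t) then
    esup (fun y => exists p, inRn n p /\
      y = eplus (EFin (dot n p x))
            (eopp (eplus (conj n J p) (esum N (fun j => escal (t j) (H j p))))))
  else EPInf.

Definition SH (n N : nat) (J : (nat -> R) -> ereal)
  (H : nat -> (nat -> R) -> ereal) (z : nat -> R) : ereal :=
  SH_xt n N J H (vfst n z) (vsnd n N z).

(* Main.v *)
Require Import Defs.
From Stdlib Require Import Reals ClassicalEpsilon.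
From Stdlib Require Import Lra Lia Classical FunctionalExtensionality.
Open Scope R_scope.

Lemma ele_refl a : ele a a.
Proof. destruct a; simpl; auto; lra. Qed.
Lemma ele_trans a b c : ele a b -> ele b c -> ele a c.
Proof. destruct a, b, c; simpl; intros; auto; try lra; try contradiction. Qed.
Lemma ele_antisym a b : ele a b -> ele b a -> a = b.
Proof. destruct a,b; simpl; intros; try contradiction; auto. f_equal; lra. Qed.
Lemma ele_top a : ele a EPInf.
Proof. destruct a; simpl; auto. Qed.
Lemma ele_bot a : ele ENInf a.
Proof. destruct a; simpl; auto. Qed.

Lemma lub_E_exists (P : ereal -> Prop) : exists s, is_lub_E P s.
Proof.
  destruct (classic (P EPInf)) as [Hp|Hnp].
  { exists EPInf. split. intros; apply ele_top. intros b Hb. apply Hb, Hp. }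
  destruct (classic (exists r, P (EFin r))) as [[r0 Hr0]|Hnf].
  - destruct (classic (exists M, forall r, P (EFin r) -> r <= M)) as [[M HM]|Hnb].
    + destruct (completeness (fun r => P (EFin r))) as [m [Hm1 Hm2]].
      { exists M; intros r Hr; apply HM, Hr. }
      { exists r0; exact Hr0. }
      exists (EFin m). split.
      * intros [r| |] Hy; simpl; auto; try (apply Hm1, Hy).
      * intros [b| |] Hb; simpl; auto.
        -- apply Hm2. intros r Hr. apply (Hb _ Hr).
        -- pose proof (Hb _ Hr0) as HH; simpl in HH; contradiction.
    + exists EPInf. split. intros; apply ele_top.
      intros [b| |] Hb; simpl; auto.
      * exfalso; apply Hnb; exists b; intros r Hr; apply (Hb _ Hr).
      * pose proof (Hb _ Hr0) as HH; simpl in HH; contradiction.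
  - exists ENInf. split.
    + intros [r| |] Hy; simpl; auto. exfalso; apply Hnf; eauto.
    + intros; simpl; auto.
Qed.

Lemma esup_spec P : is_lub_E P (esup P).
Proof. unfold esup. apply epsilon_spec, lub_E_exists. Qed.
Lemma esup_ub P y : P y -> ele y (esup P).
Proof. intro H; apply (proj1 (esup_spec P)), H. Qed.
Lemma esup_least P b : (forall y, P y -> ele y b) -> ele (esup P) b.
Proof. intro H; apply (proj2 (esup_spec P)), H. Qed.

Lemma esup_inf P : (forall M, exists y, P y /\ ele (EFin M) y) -> esup P = EPInf.
Proof.
  intros H. destruct (esup P) eqn:E; auto.
  - destruct (H (r+1)) as [y [Hy Hl]]. pose proof (esup_ub P y Hy) as Hu.
    rewrite E in Hu. pose proof (ele_trans _ _ _ Hl Hu). simpl in H0; lra.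
  - destruct (H 0) as [y [Hy Hl]]. pose proof (esup_ub P y Hy) as Hu.
    rewrite E in Hu. pose proof (ele_trans _ _ _ Hl Hu). simpl in H0; contradiction.
Qed.

Lemma ele_fin_inv a r : ele a (EFin r) -> a <> ENInf -> exists x, a = EFin x /\ x <= r.
Proof. destruct a; simpl; intros; try contradiction; eauto; congruence. Qed.

Lemma ne_bot_of_ge a r : ele (EFin r) a -> a <> ENInf.
Proof. destruct a; simpl; intros; congruence || contradiction. Qed.

Lemma escal_fin t x : escal t (EFin x) = EFin (t * x).
Proof. unfold escal. destruct (Req_EM_T t 0); auto. subst. f_equal; ring. Qed.
Lemma escal_pinf t : 0 < t -> escal t EPInf = EPInf.
Proof. intro. unfold escal. destruct (Req_EM_T t 0). lra. destruct (Rlt_dec 0 t); auto; lra. Qed.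
Lemma escal_zero a : escal 0 a = EFin 0.
Proof. unfold escal. destruct (Req_EM_T 0 0); auto. lra. Qed.

Lemma rsum_ext n f g : (forall i, (i < n)%nat -> f i = g i) -> rsum n f = rsum n g.
Proof. induction n; simpl; intros; auto. rewrite IHn by (intros; apply H; lia). rewrite H by lia. auto. Qed.
Lemma rsum_le n f g : (forall i, (i<n)%nat -> f i <= g i) -> rsum n f <= rsum n g.
Proof. induction n; simpl; intros. lra. assert (f n <= g n) by (apply H; lia).
  assert (rsum n f <= rsum n g) by (apply IHn; intros; apply H; lia). lra. Qed.
Lemma rsum_lin n a b f g : rsum n (fun i => a * f i + b * g i) = a * rsum n f + b * rsum n g.
Proof. induction n; simpl. ring. rewrite IHn; ring. Qed.
Lemma rsum_plus n f g : rsum n (fun i => f i + g i) = rsum n f + rsum n g.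
Proof. induction n; simpl. ring. rewrite IHn; ring. Qed.
Lemma rsum_minus n f g : rsum n (fun i => f i - g i) = rsum n f - rsum n g.
Proof. induction n; simpl. ring. rewrite IHn; ring. Qed.
Lemma rsum_scal n a f : rsum n (fun i => a * f i) = a * rsum n f.
Proof. induction n; simpl. ring. rewrite IHn; ring. Qed.
Lemma rsum_zero n f : (forall i, (i<n)%nat -> f i = 0) -> rsum n f = 0.
Proof. intro H. rewrite (rsum_ext n f (fun _ => 0)) by auto. clear H. induction n; simpl; auto. rewrite IHn; ring. Qed.
Lemma rsum_split n m f : rsum (n+m) f = rsum n f + rsum m (fun j => f (n+j)%nat).
Proof. induction m; simpl. rewrite Nat.add_0_r; ring. rewrite Nat.add_succ_r; simpl; rewrite IHm; ring. Qed.
Lemma rsum_delta_gen n k f : rsum n (fun j => if Nat.eqb j k then f j else 0) = if Nat.ltb k n then f k else 0.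
Proof.
  induction n; simpl. destruct k; reflexivity.
  rewrite IHn. destruct (Nat.eqb n k) eqn:E1.
  - apply Nat.eqb_eq in E1; subst. replace (Nat.ltb k k) with false by (symmetry; apply Nat.ltb_ge; lia).
    replace (Nat.ltb k (S k)) with true by (symmetry; apply Nat.ltb_lt; lia). ring.
  - apply Nat.eqb_neq in E1. destruct (Nat.ltb k n) eqn:E2.
    + apply Nat.ltb_lt in E2. replace (Nat.ltb k (S n)) with true by (symmetry; apply Nat.ltb_lt; lia). ring.
    + apply Nat.ltb_ge in E2. replace (Nat.ltb k (S n)) with false by (symmetry; apply Nat.ltb_ge; lia). ring.
Qed.
Lemma rsum_nonneg n f : (forall i, (i<n)%nat -> 0 <= f i) -> 0 <= rsum n f.
Proof. intro H. replace 0 with (rsum n (fun _ => 0)). apply rsum_le; auto. apply rsum_zero; auto. Qed.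
Lemma rsum_abs n f : Rabs (rsum n f) <= rsum n (fun i => Rabs (f i)).
Proof. induction n; simpl. rewrite Rabs_R0; lra. eapply Rle_trans. apply Rabs_triang. lra. Qed.

Lemma dot_sym n a b : dot n a b = dot n b a.
Proof. unfold dot. apply rsum_ext; intros; ring. Qed.
Lemma dot_nonneg n a : 0 <= dot n a a.
Proof. unfold dot. apply rsum_nonneg. intros; nra. Qed.
Lemma coord_sq_le n a i : (i < n)%nat -> a i * a i <= dot n a a.
Proof.
  unfold dot. induction n; intros; simpl. lia.
  destruct (Nat.eq_dec i n). subst. pose proof (dot_nonneg n a). unfold dot in H0. lra.
  assert (a i * a i <= rsum n (fun i0 : nat => a i0 * a i0)) by (apply IHn; lia). nra.
Qed.
Lemma norm_nonneg n a : 0 <= norm n a.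
Proof. apply sqrt_pos. Qed.
Lemma norm_sq n a : norm n a * norm n a = dot n a a.
Proof. unfold norm. apply sqrt_sqrt, dot_nonneg. Qed.
Lemma coord_le_norm n a i : (i < n)%nat -> Rabs (a i) <= norm n a.
Proof.
  intro H. rewrite <- sqrt_Rsqr_abs. unfold norm. apply sqrt_le_1_alt. unfold Rsqr. apply coord_sq_le; auto.
Qed.
Definition sabs n a := rsum n (fun i => Rabs (a i)).
Lemma sabs_nonneg n a : 0 <= sabs n a.
Proof. apply rsum_nonneg; intros; apply Rabs_pos. Qed.
Lemma rsum_prod_bound m a b K : (forall i, (i<m)%nat -> Rabs (b i) <= K) ->
  Rabs (rsum m (fun i => a i * b i)) <= sabs m a * K.
Proof.
  intros H. eapply Rle_trans. apply rsum_abs. unfold sabs. rewrite Rmult_comm, <- rsum_scal.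
  apply rsum_le. intros i Hi. rewrite Rabs_mult.
  assert (Rabs (b i) <= K) by auto. pose proof (Rabs_pos (a i)). nra.
Qed.
Lemma dot_bound n a b : Rabs (dot n a b) <= sabs n a * norm n b.
Proof. apply rsum_prod_bound. intros; apply coord_le_norm; auto. Qed.


Lemma rsum_id3 n F G H K c1 c2 c3 :
  (forall i, F i = c1 * G i + c2 * H i + c3 * K i) ->
  rsum n F = c1 * rsum n G + c2 * rsum n H + c3 * rsum n K.
Proof.
  intro E. rewrite (rsum_ext n F (fun i => c1 * G i + c2 * H i + c3 * K i)) by auto.
  clear E. induction n; simpl. ring. rewrite IHn; ring.
Qed.

Lemma dot_vsub_r n a b c : dot n a (vsub b c) = dot n a b - dot n a c.
Proof. unfold dot, vsub. rewrite <- rsum_minus. apply rsum_ext; intros; ring. Qed.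
Lemma dot_vsub_l n a b c : dot n (vsub b c) a = dot n b a - dot n c a.
Proof. unfold dot, vsub. rewrite <- rsum_minus. apply rsum_ext; intros; ring. Qed.
Lemma dot_vscal_l n k a b : dot n (vscal k a) b = k * dot n a b.
Proof. unfold dot, vscal. rewrite <- rsum_scal. apply rsum_ext; intros; ring. Qed.
Lemma dot_vscal_r n k a b : dot n a (vscal k b) = k * dot n a b.
Proof. unfold dot, vscal. rewrite <- rsum_scal. apply rsum_ext; intros; ring. Qed.
Lemma dot_vadd_r n a b c : dot n a (vadd b c) = dot n a b + dot n a c.
Proof. unfold dot, vadd. rewrite <- rsum_plus. apply rsum_ext; intros; ring. Qed.
Lemma dot_vadd_l n a b c : dot n (vadd b c) a = dot n b a + dot n c a.
Proof. unfold dot, vadd. rewrite <- rsum_plus. apply rsum_ext; intros; ring. Qed.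

Lemma inRn_vsub n a b : inRn n a -> inRn n b -> inRn n (vsub a b).
Proof. unfold inRn, vsub; intros Ha Hb i Hi; rewrite Ha, Hb by auto; ring. Qed.
Lemma inRn_vadd n a b : inRn n a -> inRn n b -> inRn n (vadd a b).
Proof. unfold inRn, vadd; intros Ha Hb i Hi; rewrite Ha, Hb by auto; ring. Qed.
Lemma inRn_vscal n k a : inRn n a -> inRn n (vscal k a).
Proof. unfold inRn, vscal; intros Ha i Hi; rewrite Ha by auto; ring. Qed.

Definition pdot n (u v : (nat->R)*R) := dot n (fst u) (fst v) + snd u * snd v.
Definition psub (u v : (nat->R)*R) : (nat->R)*R := (vsub (fst u) (fst v), snd u - snd v).
Definition comb (l : R) (u w : (nat->R)*R) : (nat->R)*R :=
  (vadd (vscal l (fst u)) (vscal (1-l) (fst w)), l * snd u + (1-l) * snd w).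
Definition Epi n (f : (nat->R)->ereal) (w : (nat->R)*R) := inRn n (fst w) /\ ele (f (fst w)) (EFin (snd w)).

Lemma epi_fin n f w : (forall x, inRn n x -> f x <> ENInf) -> Epi n f w ->
  exists r, f (fst w) = EFin r /\ r <= snd w.
Proof. intros Hnm [Hy Hf]. apply ele_fin_inv; auto. Qed.

Lemma epi_comb n f l u w : convex n f -> (forall x, inRn n x -> f x <> ENInf) ->
  Epi n f u -> Epi n f w -> 0 < l < 1 -> Epi n f (comb l u w).
Proof.
  intros Hc Hnm Hu Hw Hl.
  destruct (epi_fin n f u Hnm Hu) as [ru [Eu Ru]]. destruct (epi_fin n f w Hnm Hw) as [rw [Ew Rw]].
  destruct Hu as [Hu _]; destruct Hw as [Hw _].
  split; simpl. apply inRn_vadd; apply inRn_vscal; auto.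
  eapply ele_trans. apply Hc; auto. rewrite Eu, Ew, !escal_fin. simpl. nra.
Qed.

Lemma pdot_comb n l u w z :
  pdot n (psub (comb l u w) z) (psub (comb l u w) z) =
  pdot n (psub w z) (psub w z) + 2 * l * pdot n (psub w z) (psub u w) + l * l * pdot n (psub u w) (psub u w).
Proof.
  unfold pdot, psub, comb; simpl. unfold dot.
  rewrite (rsum_id3 n _ (fun i => vsub (fst w) (fst z) i * vsub (fst w) (fst z) i)
     (fun i => vsub (fst w) (fst z) i * vsub (fst u) (fst w) i)
     (fun i => vsub (fst u) (fst w) i * vsub (fst u) (fst w) i) 1 (2*l) (l*l)).
  ring. intros; unfold vsub, vadd, vscal; ring.
Qed.

Lemma pdot_par n a b z :
  pdot n (psub a b) (psub a b) =
  2 * pdot n (psub a z) (psub a z) + 2 * pdot n (psub b z) (psub b z)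
  + (-4) * pdot n (psub (comb (/2) a b) z) (psub (comb (/2) a b) z).
Proof.
  unfold pdot, psub, comb; simpl. unfold dot.
  rewrite (rsum_id3 n _ (fun i => vsub (fst a) (fst z) i * vsub (fst a) (fst z) i)
     (fun i => vsub (fst b) (fst z) i * vsub (fst b) (fst z) i)
     (fun i => vsub (vadd (vscal (/2) (fst a)) (vscal (1 - /2) (fst b))) (fst z) i *
               vsub (vadd (vscal (/2) (fst a)) (vscal (1 - /2) (fst b))) (fst z) i) 2 2 (-4)).
  field. intros; unfold vsub, vadd, vscal; field.
Qed.

Lemma cv_const c : Un_cv (fun _ : nat => c) c.
Proof. intros e He. exists 0%nat. intros. unfold R_dist. replace (c - c) with 0 by ring. rewrite Rabs_R0; lra. Qed.

Lemma cv_dot n a b la lb : (forall i, (i<n)%nat -> Un_cv (fun k => a k i) (la i)) ->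
  (forall i, (i<n)%nat -> Un_cv (fun k => b k i) (lb i)) ->
  Un_cv (fun k => dot n (a k) (b k)) (dot n la lb).
Proof.
  unfold dot. induction n; intros Ha Hb; simpl. apply cv_const.
  apply CV_plus. apply IHn; intros; [apply Ha|apply Hb]; lia.
  apply CV_mult; [apply Ha|apply Hb]; lia.
Qed.

Lemma cv_le a b la lb : Un_cv a la -> Un_cv b lb -> (forall k, a k <= b k) -> la <= lb.
Proof.
  intros Ha Hb H. apply Rnot_lt_le. intro Hlt.
  destruct (Ha ((la - lb)/2)) as [N1 H1]. lra. destruct (Hb ((la - lb)/2)) as [N2 H2]. lra.
  specialize (H1 (N1+N2)%nat ltac:(lia)). specialize (H2 (N1+N2)%nat ltac:(lia)).
  specialize (H (N1+N2)%nat). unfold R_dist in *.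
  apply Rabs_def2 in H1. apply Rabs_def2 in H2. lra.
Qed.

Lemma sq_lt_abs x e : x * x < e * e -> 0 < e -> Rabs x < e.
Proof. intros. apply Rabs_def1; nra. Qed.

Lemma ep_le N k : (0 < N)%nat -> (N <= k)%nat -> / (INR k + 1) <= / INR N.
Proof.
  intros. apply Rinv_le_contravar. apply lt_0_INR; auto.
  apply le_INR in H0. lra.
Qed.

Lemma ep_cv : Un_cv (fun k => / (INR k + 1)) 0.
Proof.
  intros e He. destruct (archimed_cor1 e He) as [N [HN HN0]]. exists N. intros k Hk.
  unfold R_dist. replace (/ (INR k + 1) - 0) with (/ (INR k + 1)) by ring.
  rewrite Rabs_right. eapply Rle_lt_trans. apply ep_le; eauto. auto.
  left; apply Rinv_0_lt_compat; pose proof (pos_INR k); lra.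
Qed.


Lemma affine_minorant n f :
  convex n f -> lsc n f -> (forall x, inRn n x -> f x <> ENInf) ->
  forall x0 r0 s0, inRn n x0 -> f x0 = EFin r0 -> s0 < r0 ->
  exists g c, inRn n g /\ (forall y, inRn n y -> ele (EFin (dot n g y + c)) (f y)) /\
              s0 < dot n g x0 + c.
Proof.
  intros Hc Hl Hnm x0 r0 s0 Hx0 Hf0 Hs.
  set (z0 := (x0, s0)).
  set (d2 := fun w => pdot n (psub w z0) (psub w z0)).
  assert (Hd2nn : forall w, 0 <= d2 w).
  { intro w. unfold d2, pdot. pose proof (dot_nonneg n (fst (psub w z0))). nra. }
  destruct (Hl x0 ((s0+r0)/2) Hx0) as [del [Hdel Hdl]].
  { rewrite Hf0; split; simpl. lra. intro E; inversion E; lra. }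
  set (c0 := Rmin (del*del) (((r0-s0)/2)*((r0-s0)/2))).
  assert (Hc0 : 0 < c0) by (unfold c0; apply Rmin_glb_lt; nra).
  assert (Hlow : forall w, Epi n f w -> c0 <= d2 w).
  { intros w Hw. destruct (epi_fin n f w Hnm Hw) as [r [Er Rr]]. destruct Hw as [Hy _].
    unfold d2, pdot, psub, z0; simpl.
    pose proof (dot_nonneg n (vsub (fst w) x0)) as Hdn.
    destruct (Rlt_dec (norm n (vsub (fst w) x0)) del) as [Hlt|Hge].
    - pose proof (Hdl (fst w) Hy Hlt) as [Ha _]. rewrite Er in Ha; simpl in Ha.
      assert (c0 <= ((r0-s0)/2)*((r0-s0)/2)) by apply Rmin_r.
      assert (snd w - s0 >= (r0-s0)/2) by lra. nra.
    - assert (c0 <= del * del) by apply Rmin_l.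
      pose proof (norm_sq n (vsub (fst w) x0)). pose proof (norm_nonneg n (vsub (fst w) x0)). apply Rnot_lt_le in Hge. assert (del*del <= norm n (vsub (fst w) x0) * norm n (vsub (fst w) x0)) by (apply Rmult_le_compat; lra). pose proof (Rle_0_sqr (snd w - s0)). unfold Rsqr in *. nra. }
  destruct (completeness (fun u => exists w, Epi n f w /\ u = - d2 w)) as [m [Hm1 Hm2]].
  { exists 0. intros u [w [_ ->]]. pose proof (Hd2nn w). lra. }
  { exists (- d2 (x0, r0)). exists (x0, r0). split; auto. split; simpl; auto. rewrite Hf0; simpl; lra. }
  set (D := - m).
  assert (HD1 : forall w, Epi n f w -> D <= d2 w).
  { intros w Hw. assert (- d2 w <= m) by (apply Hm1; eauto). unfold D; lra. }
  assert (HDpos : c0 <= D).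
  { assert (m <= - c0). apply Hm2. intros u [w [Hw ->]]. pose proof (Hlow w Hw); lra. unfold D; lra. }
  assert (HD2 : forall eps, 0 < eps -> exists w, Epi n f w /\ d2 w < D + eps).
  { intros eps He. apply NNPP. intro Hno. assert (m <= m - eps). apply Hm2. intros u [w [Hw ->]].
    assert (~ d2 w < D + eps) by (intro; apply Hno; eauto). unfold D in *; lra. lra. }
  set (ep := fun k:nat => / (INR k + 1)).
  assert (Hep : forall k, 0 < ep k).
  { intro k; unfold ep; apply Rinv_0_lt_compat; pose proof (pos_INR k); lra. }
  set (w := fun k => epsilon (inhabits (x0, r0)) (fun w => Epi n f w /\ d2 w < D + ep k)).
  assert (Hw : forall k, Epi n f (w k) /\ d2 (w k) < D + ep k).
  { intro k. unfold w. apply epsilon_spec. apply HD2, Hep. }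
  assert (Hpar : forall k m, pdot n (psub (w k) (w m)) (psub (w k) (w m)) <= 2 * ep k + 2 * ep m).
  { intros k m'. destruct (Hw k) as [Ek Dk]. destruct (Hw m') as [Em Dm].
    pose proof (HD1 _ (epi_comb n f (/2) (w k) (w m') Hc Hnm Ek Em ltac:(lra))) as Hmid.
    rewrite (pdot_par n (w k) (w m') z0). unfold d2 in *. lra. }
  assert (Hcau : forall (F : nat -> R), (forall k m, (F k - F m) * (F k - F m) <= 2 * ep k + 2 * ep m) ->
            Cauchy_crit F).
  { intros F HF eps He. destruct (archimed_cor1 (eps*eps/4)) as [N [HN HN0]]. nra.
    exists N. intros k m' Hk Hm. unfold R_dist. apply sq_lt_abs; auto.
    pose proof (HF k m'). pose proof (ep_le N k HN0 Hk). pose proof (ep_le N m' HN0 Hm).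
    unfold ep in *. lra. }
  assert (Hcy : forall i, (i < n)%nat -> Cauchy_crit (fun k => fst (w k) i)).
  { intros i Hi. apply Hcau. intros k m'. eapply Rle_trans; [|apply (Hpar k m')].
    unfold pdot, psub; simpl. pose proof (coord_sq_le n (vsub (fst (w k)) (fst (w m'))) i Hi).
    assert (Hx : (fst (w k) i - fst (w m') i) * (fst (w k) i - fst (w m') i) <=
      dot n (vsub (fst (w k)) (fst (w m'))) (vsub (fst (w k)) (fst (w m')))) by exact H.
    pose proof (Rle_0_sqr (snd (w k) - snd (w m'))). unfold Rsqr in *. lra. }
  assert (Hcs : Cauchy_crit (fun k => snd (w k))).
  { apply Hcau. intros k m'. eapply Rle_trans; [|apply (Hpar k m')].
    unfold pdot, psub; simpl. pose proof (dot_nonneg n (vsub (fst (w k)) (fst (w m')))). nra. }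
  set (ys := fun i => if Nat.ltb i n then epsilon (inhabits 0) (fun l => Un_cv (fun k => fst (w k) i) l) else 0).
  set (ss := epsilon (inhabits 0) (fun l => Un_cv (fun k => snd (w k)) l)).
  assert (Hys : forall i, (i<n)%nat -> Un_cv (fun k => fst (w k) i) (ys i)).
  { intros i Hi. unfold ys. replace (Nat.ltb i n) with true by (symmetry; apply Nat.ltb_lt; auto).
    apply epsilon_spec. destruct (R_complete _ (Hcy i Hi)) as [l Hl']; eauto. }
  assert (Hss : Un_cv (fun k => snd (w k)) ss).
  { unfold ss. apply epsilon_spec. destruct (R_complete _ Hcs) as [l Hl']; eauto. }
  assert (Hysn : inRn n ys).
  { intros i Hi. unfold ys. replace (Nat.ltb i n) with false by (symmetry; apply Nat.ltb_ge; auto). auto. }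
  clearbody ys ss.
  assert (HA : D <= dot n (vsub ys x0) (vsub ys x0) + (ss - s0) * (ss - s0)).
  { apply (cv_le (fun _ => D) (fun k => d2 (w k))). apply cv_const.
    unfold d2, pdot, psub; simpl. apply CV_plus.
    apply cv_dot; intros i Hi; unfold vsub; apply CV_minus; auto; apply cv_const.
    apply CV_mult; apply CV_minus; auto; apply cv_const.
    intro k; apply HD1, Hw. }
  assert (HQ : forall u, Epi n f u -> 0 <= dot n (vsub ys x0) (vsub (fst u) ys) + (ss - s0) * (snd u - ss)).
  { intros u Hu.
    set (Q := dot n (vsub ys x0) (vsub (fst u) ys) + (ss - s0) * (snd u - ss)).
    set (C := dot n (vsub (fst u) ys) (vsub (fst u) ys) + (snd u - ss) * (snd u - ss)).
    assert (HC : 0 <= C) by (unfold C; pose proof (dot_nonneg n (vsub (fst u) ys)); pose proof (Rle_0_sqr (snd u - ss)); unfold Rsqr in *; lra).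
    assert (Hlam : forall l, 0 < l < 1 -> -2 * l * Q - l * l * C <= 0).
    { intros l Hl0. apply (cv_le (fun k => -2 * l * pdot n (psub (w k) z0) (psub u (w k))
                                   - l * l * pdot n (psub u (w k)) (psub u (w k))) ep).
      - unfold Q, C, pdot, psub; simpl. apply CV_minus; apply CV_mult; try apply cv_const.
        + apply CV_plus. apply cv_dot; intros i Hi; unfold vsub; apply CV_minus; auto; apply cv_const.
          apply CV_mult; apply CV_minus; auto; apply cv_const.
        + apply CV_plus. apply cv_dot; intros i Hi; unfold vsub; apply CV_minus; auto; apply cv_const.
          apply CV_mult; apply CV_minus; auto; apply cv_const.
      - apply ep_cv.
      - intro k. destruct (Hw k) as [Ek Dk].
        pose proof (HD1 _ (epi_comb n f l u (w k) Hc Hnm Hu Ek Hl0)) as Hm.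
        unfold d2 in *. rewrite pdot_comb in Hm. lra. }
    apply Rnot_lt_le. intro HQn.
    set (l := Rmin (/2) (- Q / (C + 1))).
    assert (Hl1 : l <= - Q / (C + 1)) by apply Rmin_r.
    assert (Hl2 : l <= /2) by apply Rmin_l.
    assert (Hl0 : 0 < l). { unfold l; apply Rmin_glb_lt. lra. apply Rdiv_lt_0_compat; lra. }
    assert (Hl3 : l * (C + 1) <= - Q).
    { apply Rmult_le_compat_r with (r := C + 1) in Hl1; [|lra].
      replace (- Q / (C + 1) * (C + 1)) with (- Q) in Hl1 by (field; lra). lra. }
    specialize (Hlam l ltac:(lra)). nra. }
  set (a := vsub ys x0). set (b := ss - s0).
  assert (HaP : forall s, r0 <= s -> 0 <= - dot n a a + b * (s - ss)).
  { intros s Hs'. specialize (HQ (x0, s)). simpl in HQ.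
    replace (- dot n a a) with (dot n a (vsub x0 ys)).
    apply HQ. split; simpl; auto. rewrite Hf0; simpl; auto.
    unfold a. rewrite !dot_vsub_r. ring. }
  assert (Hb : 0 < b).
  { destruct (Rtotal_order b 0) as [Hbn|[Hb0|Hbp]]; auto.
    - set (P := - dot n a a).
      set (s := Rmax r0 (ss + Rabs (P + 1) / (- b))).
      assert (Hs1 : r0 <= s) by apply Rmax_l.
      assert (Hs2 : ss + Rabs (P + 1) / (- b) <= s) by apply Rmax_r.
      specialize (HaP s Hs1). fold P in HaP.
      assert (Rabs (P+1) <= (- b) * (s - ss)).
      { replace (Rabs (P+1)) with ((- b) * (Rabs (P + 1) / (- b))) by (field; lra).
        apply Rmult_le_compat_l; lra. }
      pose proof (Rle_abs (P+1)). nra.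
    - specialize (HaP r0 (Rle_refl _)). rewrite Hb0 in HaP.
      pose proof (dot_nonneg n a). assert (dot n a a = 0) by lra.
      fold a b in HA. rewrite H0, Hb0 in HA. lra. }
  exists (vscal (- / b) a), (ss + dot n a ys / b). split; [|split].
  - apply inRn_vscal. apply inRn_vsub; auto.
  - intros y Hy. destruct (f y) eqn:Ey.
    + simpl. specialize (HQ (y, r)). simpl in HQ.
      assert (Hq : 0 <= dot n a (vsub y ys) + b * (r - ss)).
      { apply HQ. split; simpl; auto. rewrite Ey; simpl; lra. }
      rewrite dot_vsub_r in Hq. rewrite dot_vscal_l.
      assert (0 <= (dot n a y - dot n a ys + b * (r - ss)) / b).
      { apply Rmult_le_pos; auto. left; apply Rinv_0_lt_compat; auto. }
      replace (r - (- / b * dot n a y + (ss + dot n a ys / b))) with ((dot n a y - dot n a ys + b * (r - ss)) / b) in H by (field; lra).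
      assert (r - (- / b * dot n a y + (ss + dot n a ys / b)) >= 0).
      replace (r - (- / b * dot n a y + (ss + dot n a ys / b))) with ((dot n a y - dot n a ys + b * (r - ss)) / b) by (field; lra). lra. lra.
    + apply ele_top.
    + exfalso; apply (Hnm y Hy); auto.
  - rewrite dot_vscal_l. pose proof (dot_nonneg n a).
    assert (dot n a a = dot n a ys - dot n a x0) by (unfold a at 2; apply dot_vsub_r).
    assert (0 <= dot n a a / b) by (apply Rmult_le_pos; auto; left; apply Rinv_0_lt_compat; auto).
    assert (Hss' : ss = s0 + b) by (unfold b; ring).
    replace (- / b * dot n a x0 + (ss + dot n a ys / b)) with (s0 + b + dot n a a / b).
    lra. rewrite H0, Hss'. field. lra.
Qed.


Definition rp (a : ereal) : R := match a with EFin r => r | _ => 0 end.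

Lemma eplus_pinf_r a : eplus a EPInf = EPInf.
Proof. destruct a; reflexivity. Qed.

Lemma esum_fin N F h : (forall j, (j<N)%nat -> F j = EFin (h j)) -> esum N F = EFin (rsum N h).
Proof. induction N; intros HF; simpl; auto. rewrite IHN by (intros; apply HF; lia). rewrite HF by lia. reflexivity. Qed.

Lemma esum_indic_all N (P : nat -> Prop) : (forall j, (j<N)%nat -> P j) -> esum N (fun j => indic (P j)) = EFin 0.
Proof.
  induction N; intros HP; simpl; auto. rewrite IHN by (intros; apply HP; lia).
  unfold indic. destruct (excluded_middle_informative (P N)). simpl; f_equal; ring.
  exfalso; apply n, HP; lia.
Qed.

Lemma esum_indic_ex N (P : nat -> Prop) : (exists j, (j<N)%nat /\ ~ P j) -> esum N (fun j => indic (P j)) = EPInf.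
Proof.
  induction N; intros [j [Hj Hn]]; simpl. lia.
  destruct (Nat.eq_dec j N). subst. unfold indic at 2. destruct (excluded_middle_informative (P N)). contradiction.
  apply eplus_pinf_r.
  rewrite IHN. reflexivity. exists j; split; auto; lia.
Qed.

Lemma elt_of_ge a b e : ele (EFin b) e -> a < b -> elt (EFin a) e.
Proof.
  intros H1 H2. unfold elt. destruct e; simpl in *; split; auto; try lra; try discriminate.
  intro E; inversion E; lra.
Qed.

Lemma vfst_vcat n x t : inRn n x -> vfst n (vcat n x t) = x.
Proof.
  intro Hx. apply functional_extensionality. intro i. unfold vfst, vcat.
  destruct (Nat.ltb i n) eqn:E; auto. symmetry; apply Hx. apply Nat.ltb_ge; auto.
Qed.
Lemma vsnd_vcat n N x t : inRn N t -> vsnd n N (vcat n x t) = t.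
Proof.
  intro Ht. apply functional_extensionality. intro j. unfold vsnd, vcat.
  destruct (Nat.ltb j N) eqn:E.
  - replace (Nat.ltb (n+j) n) with false by (symmetry; apply Nat.ltb_ge; lia).
    f_equal; lia.
  - symmetry; apply Ht. apply Nat.ltb_ge; auto.
Qed.
Lemma inRn_vcat n N x t : inRn n x -> inRn N t -> inRn (n+N) (vcat n x t).
Proof.
  intros Hx Ht i Hi. unfold vcat. replace (Nat.ltb i n) with false by (symmetry; apply Nat.ltb_ge; lia).
  apply Ht; lia.
Qed.
Lemma inRn_vfst n z : inRn n (vfst n z).
Proof. intros i Hi. unfold vfst. replace (Nat.ltb i n) with false by (symmetry; apply Nat.ltb_ge; lia). auto. Qed.
Lemma inRn_vsnd n N z : inRn N (vsnd n N z).
Proof. intros i Hi. unfold vsnd. replace (Nat.ltb i N) with false by (symmetry; apply Nat.ltb_ge; lia). auto. Qed.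
Lemma vfst_lt n z i : (i < n)%nat -> vfst n z i = z i.
Proof. intro. unfold vfst. replace (Nat.ltb i n) with true by (symmetry; apply Nat.ltb_lt; lia). auto. Qed.
Lemma vsnd_lt n N z j : (j < N)%nat -> vsnd n N z j = z (n+j)%nat.
Proof. intro. unfold vsnd. replace (Nat.ltb j N) with true by (symmetry; apply Nat.ltb_lt; lia). auto. Qed.

Lemma dot_vcat n N p E z : dot (n+N) (vcat n p E) z = dot n p (vfst n z) + dot N E (vsnd n N z).
Proof.
  unfold dot. rewrite rsum_split. f_equal.
  - apply rsum_ext. intros i Hi. rewrite vfst_lt by auto. unfold vcat.
    replace (Nat.ltb i n) with true by (symmetry; apply Nat.ltb_lt; lia). auto.
  - apply rsum_ext. intros j Hj. rewrite vsnd_lt by auto. unfold vcat.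
    replace (Nat.ltb (n+j) n) with false by (symmetry; apply Nat.ltb_ge; lia).
    replace (n + j - n)%nat with j by lia. auto.
Qed.

Lemma dot_zero_r n a : dot n a (fun _ => 0) = 0.
Proof. unfold dot. apply rsum_zero. intros; ring. Qed.

Lemma vfst_comb n z1 z2 l : vfst n (vadd (vscal l z1) (vscal (1-l) z2)) = vadd (vscal l (vfst n z1)) (vscal (1-l) (vfst n z2)).
Proof. apply functional_extensionality; intro i. unfold vfst, vadd, vscal. destruct (Nat.ltb i n); auto; ring. Qed.
Lemma vsnd_comb n N z1 z2 l : vsnd n N (vadd (vscal l z1) (vscal (1-l) z2)) = vadd (vscal l (vsnd n N z1)) (vscal (1-l) (vsnd n N z2)).
Proof. apply functional_extensionality; intro i. unfold vsnd, vadd, vscal. destruct (Nat.ltb i N); auto; ring. Qed.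


Section Main.
Variables (n N : nat) (J : (nat -> R) -> ereal) (H : nat -> (nat -> R) -> ereal).
Hypothesis hJ : Gamma0 n J.
Hypothesis hH : forall j, (j < N)%nat -> Gamma0 n (H j) /\ full_dom n (H j).

Definition term (x t p : nat -> R) : ereal :=
  eplus (EFin (dot n p x))
     (eopp (eplus (conj n J p) (esum N (fun j => escal (t j) (H j p))))).

Lemma Hfin j p : (j < N)%nat -> inRn n p -> H j p = EFin (rp (H j p)).
Proof.
  intros Hj Hp. destruct (hH j Hj) as [[[_ Hb] _] Hf].
  destruct (H j p) eqn:E; auto. exfalso; apply (Hf p Hp E). exfalso; apply (Hb p Hp E).
Qed.

Lemma J_dom : exists x0 r0, inRn n x0 /\ J x0 = EFin r0.
Proof.
  destruct hJ as [[[x0 [Hx0 Hn]] Hb] _]. exists x0, (rp (J x0)). split; auto.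
  destruct (J x0) eqn:E; auto; try contradiction. exfalso; apply (Hb x0 Hx0 E).
Qed.

Lemma conj_ge p x r : inRn n x -> J x = EFin r -> ele (EFin (dot n p x - r)) (conj n J p).
Proof.
  intros Hx Ex. eapply ele_trans; [|apply esup_ub; exists x; split; eauto].
  rewrite Ex. simpl. lra.
Qed.

Lemma conj_not_bot p : conj n J p <> ENInf.
Proof. destruct J_dom as [x0 [r0 [Hx Hr]]]. eapply ne_bot_of_ge, conj_ge; eauto. Qed.

Lemma conj_cases p : conj n J p = EPInf \/ exists jp, conj n J p = EFin jp.
Proof. pose proof (conj_not_bot p). destruct (conj n J p); eauto; contradiction. Qed.

Lemma J_minorant : exists g c, inRn n g /\ forall y, inRn n y -> ele (EFin (dot n g y + c)) (J y).
Proof.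
  destruct J_dom as [x0 [r0 [Hx Hr]]]. destruct hJ as [[_ Hb] [Hc Hl]].
  destruct (affine_minorant n J Hc Hl Hb x0 r0 (r0 - 1) Hx Hr ltac:(lra)) as [g [c [Hg [Hm _]]]].
  eauto.
Qed.

Lemma conj_le g c : (forall y, inRn n y -> ele (EFin (dot n g y + c)) (J y)) -> ele (conj n J g) (EFin (- c)).
Proof.
  intros Hm. apply esup_least. intros y [x [Hx ->]]. specialize (Hm x Hx).
  destruct (J x); simpl in *; auto; try contradiction. lra.
Qed.

Lemma conj_fin_somewhere : exists g jg, inRn n g /\ conj n J g = EFin jg.
Proof.
  destruct J_minorant as [g [c [Hg Hm]]]. exists g.
  pose proof (conj_le g c Hm). pose proof (conj_not_bot g).
  destruct (conj n J g); simpl in *; eauto; contradiction.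
Qed.

Lemma term_fin x t p jp : inRn n p -> conj n J p = EFin jp ->
  term x t p = EFin (dot n p x - (jp + rsum N (fun j => t j * rp (H j p)))).
Proof.
  intros Hp Ej. unfold term. rewrite Ej.
  rewrite (esum_fin N _ (fun j => t j * rp (H j p))).
  simpl. f_equal; ring.
  intros j Hj. rewrite (Hfin j p Hj Hp) at 1. apply escal_fin.
Qed.

Lemma term_inf x t p : conj n J p = EPInf -> term x t p = ENInf.
Proof. intro E. unfold term. rewrite E. reflexivity. Qed.

Lemma SH_pos x t : tnonneg N t -> SH_xt n N J H x t = esup (fun y => exists p, inRn n p /\ y = term x t p).
Proof. intro Ht. unfold SH_xt. destruct (excluded_middle_informative (tnonneg N t)); [reflexivity|contradiction]. Qed.

Lemma SH_neg x t : ~ tnonneg N t -> SH_xt n N J H x t = EPInf.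
Proof. intro Ht. unfold SH_xt. destruct (excluded_middle_informative (tnonneg N t)); [contradiction|reflexivity]. Qed.

Lemma SH_ge_term x t p jp : tnonneg N t -> inRn n p -> conj n J p = EFin jp ->
  ele (EFin (dot n p x - (jp + rsum N (fun j => t j * rp (H j p))))) (SH_xt n N J H x t).
Proof.
  intros Ht Hp Ej. rewrite SH_pos by auto. apply esup_ub. exists p; split; auto.
  rewrite (term_fin x t p jp); auto.
Qed.

Lemma SH_not_bot x t : tnonneg N t -> SH_xt n N J H x t <> ENInf.
Proof.
  intro Ht. destruct conj_fin_somewhere as [g [jg [Hg Eg]]].
  eapply ne_bot_of_ge, SH_ge_term; eauto.
Qed.

Lemma SH_le x t M : tnonneg N t ->
  (forall p jp, inRn n p -> conj n J p = EFin jp -> dot n p x - (jp + rsum N (fun j => t j * rp (H j p))) <= M) ->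
  ele (SH_xt n N J H x t) (EFin M).
Proof.
  intros Ht Hb. rewrite SH_pos by auto. apply esup_least. intros y [p [Hp ->]].
  destruct (conj_cases p) as [E|[jp E]].
  - rewrite term_inf by auto. apply ele_bot.
  - rewrite (term_fin x t p jp Hp E). simpl. apply Hb; auto.
Qed.

Lemma tnonneg0 : tnonneg N (fun _ => 0).
Proof. intros j Hj; lra. Qed.

Lemma SH0_le x r : inRn n x -> J x = EFin r -> ele (SH_xt n N J H x (fun _ => 0)) (EFin r).
Proof.
  intros Hx Ex. apply SH_le. apply tnonneg0. intros p jp Hp Ej.
  pose proof (conj_ge p x r Hx Ex) as Hc. rewrite Ej in Hc; simpl in Hc.
  rewrite rsum_zero by (intros; ring). lra.
Qed.


Lemma SH_proper : proper (n + N) (SH n N J H).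
Proof.
  split.
  - destruct J_dom as [x0 [r0 [Hx Hr]]]. exists (vcat n x0 (fun _ => 0)). split.
    apply inRn_vcat; auto. intros i _; auto.
    unfold SH. rewrite vfst_vcat, vsnd_vcat by (auto; intros i _; auto).
    intro E. pose proof (SH0_le x0 r0 Hx Hr) as Hh. rewrite E in Hh. simpl in Hh. exact Hh.
  - intros z Hz. unfold SH. destruct (classic (tnonneg N (vsnd n N z))).
    apply SH_not_bot; auto. rewrite SH_neg by auto. discriminate.
Qed.

Lemma SH_cases z : SH n N J H z = EPInf \/ exists s, SH n N J H z = EFin s.
Proof.
  unfold SH. destruct (classic (tnonneg N (vsnd n N z))).
  - pose proof (SH_not_bot (vfst n z) (vsnd n N z) H0). destruct (SH_xt n N J H (vfst n z) (vsnd n N z)); eauto; contradiction.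
  - rewrite SH_neg; auto.
Qed.

Lemma SH_convex : convex (n + N) (SH n N J H).
Proof.
  intros z1 z2 l Hz1 Hz2 Hl.
  destruct (SH_cases z1) as [E1|[s1 E1]].
  { rewrite E1, escal_pinf by lra. apply ele_top. }
  destruct (SH_cases z2) as [E2|[s2 E2]].
  { rewrite E2, (escal_pinf (1-l)) by lra. rewrite eplus_pinf_r. apply ele_top. }
  rewrite E1, E2, !escal_fin. simpl.
  unfold SH in *.
  assert (T1 : tnonneg N (vsnd n N z1)).
  { apply NNPP; intro Hn. rewrite SH_neg in E1 by auto. discriminate. }
  assert (T2 : tnonneg N (vsnd n N z2)).
  { apply NNPP; intro Hn. rewrite SH_neg in E2 by auto. discriminate. }
  rewrite vfst_comb, vsnd_comb. apply SH_le.
  { intros j Hj. unfold vadd, vscal. pose proof (T1 j Hj). pose proof (T2 j Hj). nra. }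
  intros p jp Hp Ej.
  pose proof (SH_ge_term (vfst n z1) (vsnd n N z1) p jp T1 Hp Ej) as G1. rewrite E1 in G1. simpl in G1.
  pose proof (SH_ge_term (vfst n z2) (vsnd n N z2) p jp T2 Hp Ej) as G2. rewrite E2 in G2. simpl in G2.
  rewrite dot_vadd_r, !dot_vscal_r.
  rewrite (rsum_ext N _ (fun j => l * (vsnd n N z1 j * rp (H j p)) + (1-l) * (vsnd n N z2 j * rp (H j p))))
    by (intros; unfold vadd, vscal; ring).
  rewrite rsum_lin. nra.
Qed.

Lemma coord_diff_le m y z i : (i < m)%nat -> Rabs (y i - z i) <= norm m (vsub y z).
Proof. intro Hi. apply (coord_le_norm m (vsub y z) i Hi). Qed.

Lemma SH_lsc : lsc (n + N) (SH n N J H).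
Proof.
  intros z a Hz Ha. unfold SH in *.
  destruct (classic (tnonneg N (vsnd n N z))) as [Tz|Tz].
  -
    assert (Hex : exists p, inRn n p /\ ~ ele (term (vfst n z) (vsnd n N z) p) (EFin a)).
    { apply NNPP; intro Hno. destruct Ha as [Ha1 Ha2]. apply Ha2. apply ele_antisym; auto.
      rewrite SH_pos by auto. apply esup_least. intros y [p [Hp ->]].
      apply NNPP; intro Hn; apply Hno; eauto. }
    destruct Hex as [p [Hp Hpa]].
    destruct (conj_cases p) as [E|[jp E]].
    { rewrite term_inf in Hpa by auto. exfalso; apply Hpa, ele_bot. }
    rewrite (term_fin _ _ p jp Hp E) in Hpa. simpl in Hpa. apply Rnot_le_lt in Hpa.
    set (h := fun j => rp (H j p)).
    set (T := fun z' => dot n p (vfst n z') - (jp + rsum N (fun j => vsnd n N z' j * h j))).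
    set (K := sabs n p + sabs N h + 1).
    assert (HK : 0 < K) by (unfold K; pose proof (sabs_nonneg n p); pose proof (sabs_nonneg N h); lra).
    exists ((T z - a) / K). split.
    { apply Rdiv_lt_0_compat; auto. unfold T, h; lra. }
    intros y Hy Hd.
    destruct (classic (tnonneg N (vsnd n N y))) as [Ty|Ty].
    2: { rewrite SH_neg by auto. split. apply ele_top. discriminate. }
    set (nr := norm (n+N) (vsub y z)).
    assert (Hdiff : T z - T y <= K * nr).
    { unfold T.
      assert (E1 : dot n p (vfst n z) - dot n p (vfst n y) = rsum n (fun i => p i * (z i - y i))).
      { unfold dot. rewrite <- rsum_minus. apply rsum_ext. intros i Hi. rewrite !vfst_lt by auto. ring. }
      assert (E2 : rsum N (fun j => vsnd n N y j * h j) - rsum N (fun j => vsnd n N z j * h j)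
                   = rsum N (fun j => h j * (y (n+j)%nat - z (n+j)%nat))).
      { rewrite <- rsum_minus. apply rsum_ext. intros j Hj. rewrite !vsnd_lt by auto. ring. }
      assert (B1 : Rabs (rsum n (fun i => p i * (z i - y i))) <= sabs n p * nr).
      { apply rsum_prod_bound. intros i Hi. unfold nr. rewrite Rabs_minus_sym. apply coord_diff_le. lia. }
      assert (B2 : Rabs (rsum N (fun j => h j * (y (n+j)%nat - z (n+j)%nat))) <= sabs N h * nr).
      { apply rsum_prod_bound. intros j Hj. unfold nr. apply (coord_diff_le (n+N) y z (n+j)). lia. }
      pose proof (Rle_abs (rsum n (fun i => p i * (z i - y i)))).
      pose proof (Rle_abs (rsum N (fun j => h j * (y (n+j)%nat - z (n+j)%nat)))).
      assert (0 <= nr) by apply norm_nonneg. unfold K. nra. }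
    assert (Hnr : K * nr < T z - a).
    { apply Rmult_lt_compat_l with (r := K) in Hd; auto.
      replace (K * ((T z - a) / K)) with (T z - a) in Hd by (field; lra). exact Hd. }
    apply (elt_of_ge a (T y)). apply (SH_ge_term (vfst n y) (vsnd n N y) p jp); auto. lra.
  -
    assert (Hex : exists j, (j < N)%nat /\ vsnd n N z j < 0).
    { apply NNPP; intro Hno. apply Tz. intros j Hj. apply Rnot_lt_le. intro; apply Hno; eauto. }
    destruct Hex as [j [Hj Hneg]]. exists (- vsnd n N z j). split. lra.
    intros y Hy Hd. rewrite SH_neg. split. apply ele_top. discriminate.
    intro Ty. specialize (Ty j Hj).
    pose proof (coord_diff_le (n+N) y z (n+j) ltac:(lia)). rewrite !vsnd_lt in * by auto.
    assert (Hlt : Rabs (y (n+j)%nat - z (n+j)%nat) < - z (n+j)%nat) by lra.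
    apply Rabs_def2 in Hlt. lra.
Qed.

Lemma SH_Gamma0 : Gamma0 (n + N) (SH n N J H).
Proof. split; [apply SH_proper|split; [apply SH_convex|apply SH_lsc]]. Qed.

Definition LHS2 (p E : nat -> R) := conj (n + N) (SH n N J H) (vcat n p E).

Lemma LHS2_ge p E : inRn n p -> inRn N E -> ele (conj n J p) (LHS2 p E).
Proof.
  intros Hp HE. apply esup_least. intros y [x [Hx ->]].
  destruct (J x) eqn:Ex.
  - set (z := vcat n x (fun _ => 0)).
    assert (Hz : inRn (n+N) z) by (apply inRn_vcat; auto; intros i _; auto).
    pose proof (SH0_le x r Hx Ex) as Hs.
    assert (ESH : SH n N J H z = SH_xt n N J H x (fun _ => 0)).
    { unfold SH, z. rewrite vfst_vcat, vsnd_vcat; auto. intros i _; auto. }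
    pose proof (SH_not_bot x (fun _ => 0) tnonneg0) as Hnb.
    destruct (ele_fin_inv _ _ Hs Hnb) as [sv [Esv Hsv]].
    eapply ele_trans; [|apply esup_ub; exists z; split; [exact Hz|reflexivity]].
    rewrite ESH, Esv, dot_vcat. unfold z. rewrite vfst_vcat, vsnd_vcat, dot_zero_r; auto.
    simpl. lra. intros i _; auto.
  - apply ele_bot.
  - exfalso. destruct hJ as [[_ Hb] _]. apply (Hb x Hx Ex).
Qed.

Lemma LHS2_le p E jp : inRn n p -> inRn N E -> conj n J p = EFin jp ->
  (forall j, (j<N)%nat -> E j + rp (H j p) <= 0) -> ele (LHS2 p E) (EFin jp).
Proof.
  intros Hp HE Ej Hc. apply esup_least. intros y [z [Hz ->]].
  destruct (SH_cases z) as [Es|[sv Es]].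
  { rewrite Es. apply ele_bot. }
  rewrite Es. unfold SH in Es.
  assert (T : tnonneg N (vsnd n N z)).
  { apply NNPP; intro Hn. rewrite SH_neg in Es by auto. discriminate. }
  pose proof (SH_ge_term (vfst n z) (vsnd n N z) p jp T Hp Ej) as G. rewrite Es in G. simpl in G.
  rewrite dot_vcat. simpl.
  assert (rsum N (fun j => vsnd n N z j * (E j + rp (H j p))) <= 0).
  { rewrite <- (rsum_zero N (fun _ => 0)) by auto. apply rsum_le. intros j Hj.
    pose proof (T j Hj). pose proof (Hc j Hj). nra. }
  rewrite (rsum_ext N _ (fun j => 1 * (E j * vsnd n N z j) + 1 * (vsnd n N z j * rp (H j p)))) in H0
    by (intros; ring).
  rewrite rsum_lin in H0. unfold dot at 2. lra.
Qed.

Lemma LHS2_inf p E k : inRn n p -> inRn N E -> (k < N)%nat -> conj n J p <> EPInf ->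
  0 < E k + rp (H k p) -> LHS2 p E = EPInf.
Proof.
  intros Hp HE Hk Hjp Hpos.
  destruct (hH k Hk) as [[[_ Hbk] [Hck Hlk]] _].
  destruct (affine_minorant n (H k) Hck Hlk Hbk p (rp (H k p)) (- E k) Hp (Hfin k p Hk Hp) ltac:(lra))
    as [g [c [Hg [Hmin Hgp]]]].
  destruct J_dom as [x0 [r0 [Hx0 Hr0]]].
  apply esup_inf. intro M.
  set (del := dot n g p + c + E k). assert (Hdel : 0 < del) by (unfold del; lra).
  set (base := dot n p x0 - r0).
  set (s := Rmax 0 ((M - base) / del)).
  assert (Hs0 : 0 <= s) by apply Rmax_l.
  assert (Hs1 : M - base <= s * del).
  { assert ((M - base)/del <= s) by apply Rmax_r.
    apply Rmult_le_compat_r with (r := del) in H0; [|lra].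
    replace ((M - base) / del * del) with (M - base) in H0 by (field; lra). lra. }
  set (ek := fun j => if Nat.eqb j k then s else 0).
  set (x' := vadd x0 (vscal s g)).
  assert (Hek : inRn N ek).
  { intros j Hj. unfold ek. replace (Nat.eqb j k) with false by (symmetry; apply Nat.eqb_neq; lia). auto. }
  assert (Tek : tnonneg N ek). { intros j Hj. unfold ek. destruct (Nat.eqb j k); lra. }
  assert (Hx' : inRn n x') by (apply inRn_vadd; auto; apply inRn_vscal; auto).
  set (z := vcat n x' ek).
  assert (ESH : SH n N J H z = SH_xt n N J H x' ek).
  { unfold SH, z. rewrite vfst_vcat, vsnd_vcat; auto. }
  assert (Hup : ele (SH_xt n N J H x' ek) (EFin (r0 - s * c))).
  { apply SH_le; auto. intros q jq Hq Eq.
    pose proof (conj_ge q x0 r0 Hx0 Hr0) as Hc. rewrite Eq in Hc; simpl in Hc.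
    rewrite (rsum_ext N _ (fun j => if Nat.eqb j k then s * rp (H j q) else 0)).
    2: { intros j Hj. unfold ek. destruct (Nat.eqb j k); ring. }
    rewrite rsum_delta_gen. replace (Nat.ltb k N) with true by (symmetry; apply Nat.ltb_lt; auto).
    pose proof (Hmin q Hq) as Hm. rewrite (Hfin k q Hk Hq) in Hm. simpl in Hm.
    unfold x'. rewrite dot_vadd_r, dot_vscal_r, (dot_sym n q g).
    assert (s * (dot n g q + c) <= s * rp (H k q)) by (apply Rmult_le_compat_l; lra).
    nra. }
  pose proof (SH_not_bot x' ek Tek) as Hnb.
  destruct (ele_fin_inv _ _ Hup Hnb) as [sv [Esv Hsv]].
  eexists. split. exists z. split. apply inRn_vcat; auto. reflexivity.
  rewrite ESH, Esv, dot_vcat. unfold z. rewrite vfst_vcat, vsnd_vcat; auto.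
  assert (HE' : dot N E ek = s * E k).
  { unfold dot. rewrite (rsum_ext N _ (fun j => if Nat.eqb j k then s * E j else 0)).
    rewrite rsum_delta_gen. replace (Nat.ltb k N) with true by (symmetry; apply Nat.ltb_lt; auto). ring.
    intros j Hj. unfold ek. destruct (Nat.eqb j k); ring. }
  rewrite HE'. unfold x'. rewrite dot_vadd_r, dot_vscal_r, (dot_sym n p g). simpl.
  unfold del, base in *. nra.
Qed.

Lemma conj_formula p E : inRn n p -> inRn N E ->
  conj (n + N) (SH n N J H) (vcat n p E) =
  eplus (conj n J p) (esum N (fun j => indic (ele (eplus (EFin (E j)) (H j p)) (EFin 0)))).
Proof.
  intros Hp HE. fold (LHS2 p E).
  destruct (conj_cases p) as [Ej|[jp Ej]].
  - rewrite Ej. simpl. pose proof (LHS2_ge p E Hp HE) as G. rewrite Ej in G.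
    destruct (LHS2 p E); simpl in G; auto; contradiction.
  - destruct (classic (forall j, (j<N)%nat -> ele (eplus (EFin (E j)) (H j p)) (EFin 0))) as [Hall|Hno].
    + rewrite esum_indic_all by auto. rewrite Ej. simpl.
      apply ele_antisym.
      * eapply ele_trans. apply LHS2_le; eauto. intros j Hj. specialize (Hall j Hj).
        rewrite (Hfin j p Hj Hp) in Hall. simpl in Hall. auto. simpl; lra.
      * pose proof (LHS2_ge p E Hp HE) as G. rewrite Ej in G. simpl. destruct (LHS2 p E); simpl in *; auto; lra.
    + assert (Hex : exists k, (k<N)%nat /\ ~ ele (eplus (EFin (E k)) (H k p)) (EFin 0)).
      { apply NNPP; intro Hn. apply Hno. intros j Hj. apply NNPP; intro; apply Hn; eauto. }
      rewrite esum_indic_ex by auto. rewrite eplus_pinf_r.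
      destruct Hex as [k [Hk Hnk]]. rewrite (Hfin k p Hk Hp) in Hnk. simpl in Hnk.
      apply (LHS2_inf p E k); auto. rewrite Ej; discriminate. lra.
Qed.

Lemma superlin j M : (j < N)%nat -> coercive1 n (H j) -> 0 <= M ->
  exists B, forall q, inRn n q -> M * norm n q - B <= rp (H j q).
Proof.
  intros Hj Hco HM.
  destruct (hH j Hj) as [[[_ Hb] [Hc Hl]] _].
  set (o := fun _ : nat => 0).
  assert (Ho : inRn n o) by (intros i _; auto).
  destruct (affine_minorant n (H j) Hc Hl Hb o (rp (H j o)) (rp (H j o) - 1) Ho (Hfin j o Hj Ho) ltac:(lra))
    as [g [c [Hg [Hmin _]]]].
  destruct (Hco M) as [R0 HR0].
  exists (Rabs (M*R0) + Rabs (sabs n g * R0) + Rabs c). intros q Hq.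
  pose proof (Rabs_pos (M*R0)). pose proof (Rabs_pos (sabs n g * R0)). pose proof (Rabs_pos c).
  destruct (Rlt_dec R0 (norm n q)) as [Hlt|Hge].
  - pose proof (HR0 q Hq Hlt) as Hh. rewrite (Hfin j q Hj Hq) in Hh. simpl in Hh. lra.
  - apply Rnot_lt_le in Hge.
    pose proof (Hmin q Hq) as Hh. rewrite (Hfin j q Hj Hq) in Hh. simpl in Hh.
    pose proof (dot_bound n g q) as A1. pose proof (Rle_abs (- dot n g q)) as A2. rewrite Rabs_Ropp in A2.
    pose proof (sabs_nonneg n g). pose proof (norm_nonneg n q).
    pose proof (Rle_abs (M*R0)). pose proof (Rle_abs (sabs n g * R0)). pose proof (Rle_abs (- c)) as A3.
    rewrite Rabs_Ropp in A3.
    assert (M * norm n q <= M * R0) by (apply Rmult_le_compat_l; lra).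
    assert (sabs n g * norm n q <= sabs n g * R0) by (apply Rmult_le_compat_l; lra).
    lra.
Qed.

Lemma SH_finite x t :
  (forall j, (j < N)%nat -> coercive1 n (H j)) ->
  inRn n x -> inRn N t -> tnonneg N t -> (exists j, (j < N)%nat /\ t j <> 0) ->
  exists r, SH n N J H (vcat n x t) = EFin r.
Proof.
  intros Hco Hx Ht Tt [k [Hk Htk]].
  assert (Htk' : 0 < t k) by (pose proof (Tt k Hk); lra).
  unfold SH. rewrite vfst_vcat, vsnd_vcat by auto.
  destruct J_dom as [x0 [r0 [Hx0 Hr0]]].
  set (Mk := sabs n (vsub x x0) / t k).
  assert (HMk : 0 <= Mk) by (unfold Mk; apply Rmult_le_pos; [apply sabs_nonneg|left; apply Rinv_0_lt_compat; auto]).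
  set (Mj := fun j => if Nat.eqb j k then Mk else 0).
  set (Bf := fun j => epsilon (inhabits 0) (fun B => forall q, inRn n q -> Mj j * norm n q - B <= rp (H j q))).
  assert (HBf : forall j, (j<N)%nat -> forall q, inRn n q -> Mj j * norm n q - Bf j <= rp (H j q)).
  { intros j Hj. unfold Bf. apply epsilon_spec. apply superlin; auto. unfold Mj; destruct (Nat.eqb j k); lra. }
  set (TB := rsum N (fun j => t j * Bf j)).
  assert (Hup : ele (SH_xt n N J H x t) (EFin (r0 + TB))).
  { apply SH_le; auto. intros q jq Hq Eq.
    pose proof (conj_ge q x0 r0 Hx0 Hr0) as Hc. rewrite Eq in Hc; simpl in Hc.
    assert (HS : rsum N (fun j => t j * (Mj j * norm n q - Bf j)) <= rsum N (fun j => t j * rp (H j q))).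
    { apply rsum_le. intros j Hj. apply Rmult_le_compat_l. apply Tt; auto. apply HBf; auto. }
    rewrite (rsum_ext N _ (fun j => norm n q * (if Nat.eqb j k then t j * Mk else 0) + (-1) * (t j * Bf j))) in HS.
    2: { intros j Hj. unfold Mj. destruct (Nat.eqb j k); ring. }
    rewrite rsum_lin, rsum_delta_gen in HS. replace (Nat.ltb k N) with true in HS by (symmetry; apply Nat.ltb_lt; auto).
    assert (A0 : t k * Mk = sabs n (vsub x x0)) by (unfold Mk; field; lra).
    pose proof (dot_bound n (vsub x x0) q) as A1. pose proof (Rle_abs (dot n (vsub x x0) q)) as A2.
    rewrite dot_vsub_l in A1, A2. rewrite (dot_sym n x q), (dot_sym n x0 q) in A1, A2.
    fold TB in HS. nra. }
  pose proof (SH_not_bot x t Tt) as Hnb.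
  destruct (ele_fin_inv _ _ Hup Hnb) as [sv [Esv _]]. eauto.
Qed.

End Main.


Theorem proposition3p1 (n N : nat) (J : (nat -> R) -> ereal)
  (H : nat -> (nat -> R) -> ereal)
  (hn : (1 <= n)%nat) (hN : (1 <= N)%nat)
  (hJ : Gamma0 n J)
  (hH : forall j, (j < N)%nat -> Gamma0 n (H j) /\ full_dom n (H j)) :
  Gamma0 (n + N) (SH n N J H) /\
  (forall p E, inRn n p -> inRn N E ->
     conj (n + N) (SH n N J H) (vcat n p E) =
     eplus (conj n J p)
       (esum N (fun j => indic (ele (eplus (EFin (E j)) (H j p)) (EFin 0))))) /\
  ((* (H1) *)
   (forall j, (j < N)%nat ->
      finite_valued n (H j) /\ convex n (H j) /\ coercive1 n (H j)) ->
   (exists j, (j < N)%nat /\ strictly_convex n (H j)) ->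
   (* (H2) *)
   Gamma0 n J ->
   forall x t, inRn n x -> inRn N t -> tnonneg N t ->
     (exists j, (j < N)%nat /\ t j <> 0) ->
     exists r, SH n N J H (vcat n x t) = EFin r).
Proof.
  split; [|split].
  - apply SH_Gamma0; auto.
  - intros p E Hp HE. apply conj_formula; auto.
  - intros H1 _ _ x t Hx Ht Tt Hex. apply SH_finite; auto.
    intros j Hj. apply (H1 j Hj).
Qed.
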